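(* Let $R>0$ and let $(m,n)$, $(m',n')$ be integer points on the ellipse $X^2+XY+Y^2=R^2$ with $1\le m<m'\le n'<n$. Then $F_R(m,n)>F_R(m',n')$, and, as $R\to\infty$, $$F_R(m,n)-F_R(m',n')\gg\frac1{m^4},$$ with an absolute implied constant.
   Context: For integers $m,n\ge1$ with $m^2+mn+n^2=R^2$, $F_R(m,n)=\frac{R^4}{m^2n^2(m+n)^2}=\frac1{m^2}+\frac1{n^2}+\frac1{(m+n)^2}$. *)

(* Defs.v *)
From Stdlib Require Import Reals.
Open Scope R_scope.

Definition on_ellipse (Rad : R) (m n : nat) : Prop :=
  INR m ^ 2 + INR m * INR n + INR n ^ 2 = Rad ^ 2.

Definition F (Rad : R) (m n : nat) : R :=
  Rad ^ 4 / (INR m ^ 2 * INR n ^ 2 * (INR m + INR n) ^ 2).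

(* Main.v *)
Require Import Defs.
From Stdlib Require Import Reals Lra Lia Psatz.
Open Scope R_scope.

Lemma sum_lt (r a b a' b' : R) : 0 <= a -> a < a' -> a' <= b' -> b' < b ->
  a^2+a*b+b^2 = r^2 -> a'^2+a'*b'+b'^2=r^2 -> a+b < a'+b'.
Proof.
  intros. destruct (Rlt_or_le (a+b) (a'+b')) as [h|h]; auto.
  exfalso.
  assert (3*(a'+b')^2 <= 3*(a+b)^2) by nra.
  assert ((b'-a')^2 < (b-a)^2) by nra.
  nra.
Qed.

Lemma diffP (r a b a' b' : R) : 1 <= a -> a < a' -> a'<=b' -> b' < b ->
  a+b+1 <= a'+b' ->
  a^2+a*b+b^2 = r^2 -> a'^2+a'*b'+b'^2=r^2 ->
  a'*b'*(a'+b') - a*b*(a+b) >= 2*r^2.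
Proof.
  intros.
  assert (Hs : (a+b)^2 >= r^2) by nra.
  assert (E : a'*b'*(a'+b') - a*b*(a+b) = ((a'+b')-(a+b))*((a'+b')^2+(a'+b')*(a+b)+(a+b)^2-r^2)) by nra.
  rewrite E.
  assert ((a'+b')^2+(a'+b')*(a+b)+(a+b)^2-r^2 >= 2*r^2) by nra.
  assert ((a'+b') - (a+b) >= 1) by lra.
  nra.
Qed.

Lemma Fid (r a b : R) : 0 < a -> 0 < b -> a^2+a*b+b^2 = r^2 ->
  r^4/(a^2*b^2*(a+b)^2) = /a^2 + /b^2 + /(a+b)^2.
Proof.
  intros. replace (r^4) with ((r^2)^2) by ring. rewrite <- H1. field. lra.
Qed.

Lemma part1 (r a b a' b' : R) : 0 < r -> 1 <= a -> a < a' -> a'<=b' -> b' < b ->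
  a+b+1 <= a'+b' ->
  a^2+a*b+b^2 = r^2 -> a'^2+a'*b'+b'^2=r^2 ->
  r^4/(a^2*b^2*(a+b)^2) > r^4/(a'^2*b'^2*(a'+b')^2).
Proof.
  intros. pose proof (diffP r a b a' b' H0 H1 H2 H3 H4 H5 H6).
  assert (hP : 0 < a*b*(a+b)) by (apply Rmult_lt_0_compat; [nra|lra]).
  replace (a^2*b^2*(a+b)^2) with ((a*b*(a+b))^2) by ring.
  replace (a'^2*b'^2*(a'+b')^2) with ((a'*b'*(a'+b'))^2) by ring.
  unfold Rdiv, Rgt. apply Rmult_lt_compat_l. apply pow_lt; lra.
  assert (0 < (a*b*(a+b))^2) by (apply pow_lt; lra).
  assert ((a*b*(a+b))^2 < (a'*b'*(a'+b'))^2).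
  { set (x := a*b*(a+b)) in *. set (y := a'*b'*(a'+b')) in *.
    assert (0 < r^2) by (apply pow_lt; lra). assert (x < y) by lra. clear -H10 hP. simpl. nra. }
  apply Rinv_lt_contravar. apply Rmult_lt_0_compat; lra. lra.
Qed.

Lemma part2 (r a b a' b' : R) : 0 < r -> 1 <= a -> a < a' -> a'<=b' -> b' < b ->
  a+b+1 <= a'+b' ->
  a^2+a*b+b^2 = r^2 -> a'^2+a'*b'+b'^2=r^2 ->
  r^4/(a^2*b^2*(a+b)^2) - r^4/(a'^2*b'^2*(a'+b')^2) >= /16 / a^4.
Proof.
  intros. pose proof (diffP r a b a' b' H0 H1 H2 H3 H4 H5 H6).
  destruct (Rle_or_lt (2*a) a') as [HA|HB].
  - rewrite (Fid r a b), (Fid r a' b'); try lra.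
    assert (/b^2 > 0) by (apply Rinv_0_lt_compat; nra).
    assert (/(a+b)^2 > 0) by (apply Rinv_0_lt_compat; nra).
    assert (/b'^2 <= /a'^2) by (apply Rinv_le_contravar; nra).
    assert (/(a'+b')^2 <= /(4*a'^2)) by (apply Rinv_le_contravar; nra).
    assert (/a'^2 <= /(4*a^2)) by (apply Rinv_le_contravar; nra).
    assert (/(4*a'^2) = /4 * /a'^2) by (field; nra).
    assert (/(4*a^2) = /4 * /a^2) by (field; nra).
    assert (/a^4 <= /a^2) by (apply Rinv_le_contravar; [simpl; nra| assert (1 <= a*a) by nra; simpl; nra]).
    assert (/a^2 > 0) by (apply Rinv_0_lt_compat; nra).
    unfold Rdiv. lra.
  - set (P := a*b*(a+b)) in *. set (P' := a'*b'*(a'+b')) in *.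
    assert (hP : 0 < P) by (apply Rmult_lt_0_compat; [nra|lra]).
    assert (hb : b <= r) by nra.
    assert (hs : a+b <= 2*r) by nra.
    assert (hb' : b' <= r) by nra.
    assert (hs' : a'+b' <= 2*r) by nra.
    assert (HP : P <= a*r*(2*r)).
    { unfold P. apply Rmult_le_compat; try nra. }
    assert (HP' : P' <= (2*a)*r*(2*r)).
    { unfold P'. apply Rmult_le_compat; try nra. }
    assert (N : 16*r^4*(P'^2-P^2)*a^4 - P^2*P'^2 >= 0).
    { assert (P'^2-P^2 >= 4*r^2*P) by nra.
      assert (P*P'^2 <= 32*a^3*r^6).
      { assert (P'^2 <= 16*a^2*r^4) by nra.
        assert (P*P'^2 <= (2*a*r^2)*P'^2) by (apply Rmult_le_compat_r; nra).
        nra. }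
      assert (16*r^4*(P'^2-P^2)*a^4 >= 64*r^6*P*a^4) by
        (assert (0 <= 16*r^4*a^4) by nra; nra).
      assert (P^2*P'^2 <= P*(32*a^3*r^6)) by nra.
      assert (a^4 >= a^3) by nra.
      nra. }
    replace (a^2*b^2*(a+b)^2) with (P^2) by (unfold P; ring).
    replace (a'^2*b'^2*(a'+b')^2) with (P'^2) by (unfold P'; ring).
    assert (E : r^4/P^2 - r^4/P'^2 - /16/a^4 =
      (16*r^4*(P'^2-P^2)*a^4 - P^2*P'^2) / (16*P^2*P'^2*a^4)).
    { field. repeat split; nra. }
    assert (0 <= (16*r^4*(P'^2-P^2)*a^4 - P^2*P'^2) / (16*P^2*P'^2*a^4)).
    { unfold Rdiv. apply Rmult_le_pos. lra. left. apply Rinv_0_lt_compat. assert (0 < r^2) by (apply pow_lt; lra).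
      assert (0 < P') by lra.
      assert (0 < P'^2) by (apply pow_lt; lra). assert (0<a^4) by (apply pow_lt; lra).
      assert (0 < P^2) by (apply pow_lt; lra).
      repeat apply Rmult_lt_0_compat; lra. }
    lra.
Qed.

Lemma facts (Rad : R) (m n m' n' : nat) : 0 < Rad -> on_ellipse Rad m n -> on_ellipse Rad m' n' ->
      (1 <= m)%nat -> (m < m')%nat -> (m' <= n')%nat -> (n' < n)%nat ->
  1 <= INR m /\ INR m + 1 <= INR m' /\ INR m' <= INR n' /\ INR n' + 1 <= INR n /\
  INR m + INR n + 1 <= INR m' + INR n'.
Proof.
  intros. unfold on_ellipse in *.
  assert (h1 : 1 <= INR m) by (apply (le_INR 1); lia).
  assert (h2 : INR m + 1 <= INR m') by (rewrite <- S_INR; apply le_INR; lia).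
  assert (h3 : INR m' <= INR n') by (apply le_INR; lia).
  assert (h4 : INR n' + 1 <= INR n) by (rewrite <- S_INR; apply le_INR; lia).
  repeat split; try assumption.
  assert (INR m + INR n < INR m' + INR n') by
    (apply (sum_lt Rad); lra).
  rewrite <- !plus_INR in *. rewrite <- S_INR. apply le_INR.
  apply INR_lt in H6. lia.
Qed.

Theorem proposition7p2 :
  (forall (Rad : R) (m n m' n' : nat),
      0 < Rad -> on_ellipse Rad m n -> on_ellipse Rad m' n' ->
      (1 <= m)%nat -> (m < m')%nat -> (m' <= n')%nat -> (n' < n)%nat ->
      F Rad m n > F Rad m' n')
  /\
  (exists c : R, 0 < c /\ exists R0 : R, forall (Rad : R) (m n m' n' : nat),
      R0 <= Rad -> on_ellipse Rad m n -> on_ellipse Rad m' n' ->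
      (1 <= m)%nat -> (m < m')%nat -> (m' <= n')%nat -> (n' < n)%nat ->
      F Rad m n - F Rad m' n' >= c / INR m ^ 4).
Proof.
  split.
  - intros. destruct (facts Rad m n m' n') as (h1&h2&h3&h4&h5); auto.
    unfold F, on_ellipse in *. apply part1; lra.
  - exists (/16). split. lra. exists 1. intros.
    destruct (facts Rad m n m' n') as (h1&h2&h3&h4&h5); auto; try lra.
    unfold F, on_ellipse in *. apply part2; lra.
Qed.
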